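(* For every triangle $ABC$ with $b=c>a$, we have $AX_{25}<AX_{24}<AX_{14}$; that is, in the isosceles order, $X_{25}\prec X_{24}\prec X_{14}$.
   Context: $X_n$ denotes the $n$-th triangle center listed in Kimberling's Encyclopedia of Triangle Centers (ETC), given by barycentric coordinates in terms of $a=BC$, $b=CA$, $c=AB$. The isosceles order: $P\prec Q$ if $P$ is closer to $A$ than $Q$ in every isosceles triangle $ABC$ with $b=c>a$. *)

(* Defs.v *)
(* elementary geometry of a triangle given by its side lengths
   a = BC, b = CA, c = AB, over an arbitrary real closed field R. *)
From mathcomp Require Import all_boot all_order all_algebra.
Set Implicit Arguments. Unset Strict Implicit. Unset Printing Implicit Defensive.
Import Order.TTheory GRing.Theory Num.Theory.
Local Open Scope ring_scope.

Section Triangle.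
Variable R : rcfType.

Definition tri_area (a b c : R) : R :=
  let s := (a + b + c) / 2 in Num.sqrt (s * (s - a) * (s - b) * (s - c)).

Definition SA (a b c : R) : R := (b ^+ 2 + c ^+ 2 - a ^+ 2) / 2.
Definition S2 (a b c : R) : R := 4 * (tri_area a b c) ^+ 2.

(* A triangle center given by its first barycentric coordinate function f:
   barycentrics  f(a,b,c) : f(b,c,a) : f(c,a,b). *)
Definition center (f : R -> R -> R -> R) (a b c : R) : R * R * R :=
  (f a b c, f b c a, f c a b).

(* X(14), second isogonic center (ETC):
   a^4 - 2(b^2-c^2)^2 + a^2(b^2+c^2 - 4 sqrt3 Delta). *)
Definition X14f (a b c : R) : R :=
  a ^+ 4 - 2 * (b ^+ 2 - c ^+ 2) ^+ 2
  + a ^+ 2 * (b ^+ 2 + c ^+ 2 - 4 * Num.sqrt 3 * tri_area a b c).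

(* X(24), perspector of ABC and the orthic-of-orthic triangle (ETC):
   a^2 S_B S_C (S_A^2 - S^2). *)
Definition X24f (a b c : R) : R :=
  a ^+ 2 * SA b c a * SA c a b * (SA a b c ^+ 2 - S2 a b c).

(* X(25), homothetic center of the orthic and tangential triangles (ETC):
   a^2 S_B S_C  (= a^2 / S_A up to the common factor S_A S_B S_C). *)
Definition X25f (a b c : R) : R :=
  a ^+ 2 * SA b c a * SA c a b.

Definition X14 := center X14f.
Definition X24 := center X24f.
Definition X25 := center X25f.

(* Distance from vertex A to the point with (unnormalized) barycentrics
   (u : v : w):  with v' = v/(u+v+w), w' = w/(u+v+w) we have
   P - A = v'(B - A) + w'(C - A), hence
   AP^2 = v'^2 c^2 + w'^2 b^2 + 2 v' w' (B-A).(C-A),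
   (B-A).(C-A) = (b^2+c^2-a^2)/2. *)
Definition distA (a b c : R) (P : R * R * R) : R :=
  let: (u, v, w) := P in
  let v' := v / (u + v + w) in
  let w' := w / (u + v + w) in
  Num.sqrt (v' ^+ 2 * c ^+ 2 + w' ^+ 2 * b ^+ 2
            + v' * w' * (b ^+ 2 + c ^+ 2 - a ^+ 2)).

Definition iso_prec (P Q : R -> R -> R -> R * R * R) : Prop :=
  forall a b c : R, 0 < a -> a < b -> b = c ->
    distA a b c (P a b c) < distA a b c (Q a b c).

End Triangle.

(* Main.v *)
Require Import Defs.
From mathcomp Require Import all_boot all_order all_algebra.
From mathcomp Require Import ring lra.
Import Order.TTheory GRing.Theory Num.Theory.
Local Open Scope ring_scope.
Section S.
Variable R : rcfType.
Lemma div_eq (v den N D : R) : den != 0 -> D != 0 -> v * D = N * den -> v / den = N / D.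
Proof. by move=> h1 h2 e; apply/eqP; rewrite eqr_div // e. Qed.
Lemma frac_lt (N1 D1 N2 D2 : R) : D1 != 0 -> D2 != 0 -> 0 < (N2 * D1 - N1 * D2) / (D1 * D2) -> N1 / D1 < N2 / D2.
Proof. move=> h1 h2 h. rewrite -subr_gt0. have -> : N2 / D2 - N1 / D1 = (N2 * D1 - N1 * D2) / (D1 * D2). by field; rewrite h1 h2. exact h. Qed.
Lemma dist_eq (a b u v : R) : distA a b b (u, v, v) = Num.sqrt ((v / (u + v + v)) ^+ 2 * (4 * b ^+ 2 - a ^+ 2)).
Proof. rewrite /distA; congr Num.sqrt; set t := v / _; ring. Qed.
Lemma cmp (a b t1 t2 : R) : 0 < a -> a < b -> 0 <= t1 -> t1 < t2 ->
  Num.sqrt (t1 ^+ 2 * (4 * b ^+ 2 - a ^+ 2)) < Num.sqrt (t2 ^+ 2 * (4 * b ^+ 2 - a ^+ 2)).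
Proof. move=> ha hab h1 h12. have hK : 0 < 4 * b ^+ 2 - a ^+ 2 by nra.
rewrite ltr_sqrt; last by apply: mulr_gt0 => //; nra. rewrite ltr_pM2r //; nra. Qed.
Definition F (a b : R) := a ^+ 2 * (4 * b ^+ 2 - a ^+ 2) / 16.
Lemma area_eq (a b : R) : [/\ tri_area a b b = Num.sqrt (F a b), tri_area b b a = Num.sqrt (F a b) & tri_area b a b = Num.sqrt (F a b)].
Proof. rewrite /tri_area /F /=; split; congr Num.sqrt; by field. Qed.

Lemma frac_pos (N1 D1 N2 D2 : R) : 0 < D1 -> 0 < D2 -> 0 < N2 * D1 - N1 * D2 -> N1 / D1 < N2 / D2.
Proof. move=> h1 h2 h; apply: frac_lt; rewrite ?gt_eqF //. apply: divr_gt0 => //; exact: mulr_gt0. Qed.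
Lemma frac_neg (N1 D1 N2 D2 : R) : 0 < D1 -> D2 < 0 -> 0 < N1 * D2 - N2 * D1 -> N1 / D1 < N2 / D2.
Proof. move=> h1 h2 h. rewrite -subr_gt0.
have -> : N2 / D2 - N1 / D1 = (N1 * D2 - N2 * D1) / (D1 * - D2).
  by field; rewrite lt_eqF // gt_eqF.
apply: divr_gt0 => //; apply: mulr_gt0 => //; rewrite oppr_gt0 //. Qed.
Lemma F_ge0 (a b : R) : 0 < a -> a < b -> 0 <= F a b.
Proof. move=> ha hab; rewrite /F; apply: divr_ge0 => //; apply: mulr_ge0; nra. Qed.
Lemma S2_eq (a b : R) : 0 < a -> a < b ->
  [/\ S2 a b b = 4 * F a b, S2 b b a = 4 * F a b & S2 b a b = 4 * F a b].
Proof. move=> ha hab; case: (area_eq a b) => e1 e2 e3.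
by rewrite /S2 e1 e2 e3 sqr_sqrtr //; apply: F_ge0. Qed.
Definition P (a : R) := a ^+ 2 / 2.
Definition Q (a b : R) := b ^+ 2 - a ^+ 2 / 2.
Definition t25 (p q : R) := (p + q) * q / (2 * (p ^+ 2 + p * q + q ^+ 2)).
Definition t24 (p q : R) := (p + q) * q ^+ 2 / ((p + 2 * q) * (p ^+ 2 + q ^+ 2)).
Lemma PQ_pos (a b : R) : 0 < a -> a < b -> 0 < P a /\ P a < Q a b.
Proof. move=> ha hab; rewrite /P /Q; split; nra. Qed.
Lemma X25_dist (a b : R) : 0 < a -> a < b -> distA a b b (X25 a b b) =
  Num.sqrt (t25 (P a) (Q a b) ^+ 2 * (4 * b ^+ 2 - a ^+ 2)).
Proof. move=> ha hab; case: (PQ_pos _ _ ha hab) => hP hPQ.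
rewrite /X25 /center.
have -> : X25f b a b = X25f b b a by rewrite /X25f /SA; ring.
rewrite dist_eq /t25; congr (Num.sqrt (_ ^+ 2 * _)); apply: div_eq.
- have -> : X25f a b b + X25f b b a + X25f b b a = 2 * P a * ((P a) ^+ 2 + P a * Q a b + (Q a b) ^+ 2).
    by rewrite /X25f /SA /P /Q; field.
  rewrite gt_eqF //; apply: mulr_gt0; [apply: mulr_gt0 => // | nra].
- rewrite gt_eqF //; apply: mulr_gt0 => //; nra.
- by rewrite /X25f /SA /P /Q; field.
Qed.
Lemma X24_dist (a b : R) : 0 < a -> a < b -> distA a b b (X24 a b b) =
  Num.sqrt (t24 (P a) (Q a b) ^+ 2 * (4 * b ^+ 2 - a ^+ 2)).
Proof. move=> ha hab; case: (PQ_pos _ _ ha hab) => hP hPQ.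
case: (S2_eq _ _ ha hab) => e1 e2 e3.
rewrite /X24 /center.
have -> : X24f b a b = X24f b b a by rewrite /X24f e2 e3 /SA; ring.
rewrite dist_eq /t24; congr (Num.sqrt (_ ^+ 2 * _)); apply: div_eq.
- have -> : X24f a b b + X24f b b a + X24f b b a = - (2 * P a ^+ 2 * (P a + 2 * Q a b) * ((P a) ^+ 2 + (Q a b) ^+ 2)).
    by rewrite /X24f e1 e2 /SA /P /Q /F; field.
  rewrite oppr_eq0 gt_eqF //; apply: mulr_gt0; [apply: mulr_gt0; [apply: mulr_gt0 => //; nra | nra] | nra].
- rewrite gt_eqF //; apply: mulr_gt0; nra.
- by rewrite /X24f e1 e2 /SA /P /Q /F; field.
Qed.

Lemma key14 (p q m : R) : 0 < p -> p < q -> 0 <= m -> m ^+ 2 = 12 * p * (p + 2 * q) ->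
  t24 p q < (2 * p ^+ 2 + 10 * p * q - m * (p + q)) / (12 * p * (p + 2 * q) - 2 * m * (2 * p + q)).
Proof. move=> hp hpq hm hm2.
have hq : 0 < q by lra.
have mpos : 0 < m.
  rewrite lt_neqAle hm andbT; apply/eqP => m0; move: hm2; rewrite -m0 expr0n /= => h.
  have : 0 < 12 * p * (p + 2 * q) by apply: mulr_gt0; [apply: mulr_gt0 | nra].
  by rewrite -h ltxx.
have mlt : m < 2 * (2 * p + q).
  have h2 : m ^+ 2 < (2 * (2 * p + q)) ^+ 2 by rewrite hm2; nra.
  rewrite ltNge; apply/negP => h3; move: h2; rewrite ltNge; apply/negP/negPn; nra.
apply: frac_neg.
- apply: mulr_gt0; nra.
- have -> : 12 * p * (p + 2 * q) - 2 * m * (2 * p + q) = m * (m - 2 * (2 * p + q)).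
    by rewrite mulrBr -expr2 hm2; ring.
  by rewrite pmulr_rlt0 // subr_lt0.
set X := m * (p + q) * (p + 3 * q).
set Y := 2 * (p + 2 * q) * (p ^+ 2 + 6 * p * q + q ^+ 2).
have hY : 0 < Y by rewrite /Y; apply: mulr_gt0; [apply: mulr_gt0 | ]; nra.
have hX : 0 <= X by rewrite /X; apply: mulr_ge0; [apply: mulr_ge0 | ]; nra.
have hXY : X < Y.
  have : X ^+ 2 < Y ^+ 2.
    rewrite -subr_gt0.
    have -> : Y ^+ 2 - X ^+ 2 = 4 * (p + 2 * q) * (q - p) * (2 * q ^+ 4 + 16 * p ^+ 2 * q ^+ 2 + 12 * p ^+ 3 * q + 2 * p ^+ 4).
      by rewrite /X /Y !exprMn hm2; ring.
    have q4 : 0 < q ^+ 4 by exact: exprn_gt0.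
    have p4 : 0 < p ^+ 4 by exact: exprn_gt0.
    have p2q2 : 0 < p ^+ 2 * q ^+ 2 by apply: mulr_gt0; exact: exprn_gt0.
    have p3q : 0 < p ^+ 3 * q by apply: mulr_gt0 => //; exact: exprn_gt0.
    apply: mulr_gt0; [apply: mulr_gt0; [apply: mulr_gt0 => //; nra | nra] | lra].
  move=> h2; rewrite ltNge; apply/negP => h3; move: h2; rewrite ltNge; apply/negP/negPn; nra.
have -> : (p + q) * q ^+ 2 * (12 * p * (p + 2 * q) - 2 * m * (2 * p + q)) -
  (2 * p ^+ 2 + 10 * p * q - m * (p + q)) * ((p + 2 * q) * (p ^+ 2 + q ^+ 2)) = p * (q - p) * (Y - X).
  by rewrite /X /Y; ring.
apply: mulr_gt0; [apply: mulr_gt0 => //; nra | by rewrite subr_gt0].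
Qed.

Lemma t24_ge0 (p q : R) : 0 < p -> p < q -> 0 <= t24 p q.
Proof. move=> hp hpq; have hq : 0 < q by lra.
rewrite /t24; apply: divr_ge0; apply: mulr_ge0; nra. Qed.
Lemma t25_ge0 (p q : R) : 0 < p -> p < q -> 0 <= t25 p q.
Proof. move=> hp hpq; have hq : 0 < q by lra.
rewrite /t25; apply: divr_ge0; [apply: mulr_ge0 | apply: mulr_ge0]; nra. Qed.
Lemma t25_lt (p q : R) : 0 < p -> p < q -> t25 p q < t24 p q.
Proof. move=> hp hpq; have hq : 0 < q by lra.
rewrite /t25 /t24; apply: frac_pos.
- apply: mulr_gt0 => //; nra.
- apply: mulr_gt0; nra.
have -> : (p + q) * q ^+ 2 * (2 * (p ^+ 2 + p * q + q ^+ 2)) -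
  (p + q) * q * ((p + 2 * q) * (p ^+ 2 + q ^+ 2)) = (p + q) * q * p * (q - p) * (q + p) by ring.
apply: mulr_gt0; [apply: mulr_gt0; [apply: mulr_gt0; [apply: mulr_gt0|]|]|]; lra.
Qed.
Lemma X14_dist (a b : R) : 0 < a -> a < b -> distA a b b (X14 a b b) =
  Num.sqrt ((X14f b b a / (X14f a b b + X14f b b a + X14f b b a)) ^+ 2 * (4 * b ^+ 2 - a ^+ 2)).
Proof. move=> ha hab; case: (area_eq a b) => e1 e2 e3.
rewrite /X14 /center.
have -> : X14f b a b = X14f b b a by rewrite /X14f e2 e3; ring.
by rewrite dist_eq.
Qed.
Lemma X14_t (a b : R) : 0 < a -> a < b ->
  t24 (P a) (Q a b) < X14f b b a / (X14f a b b + X14f b b a + X14f b b a).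
Proof. move=> ha hab; case: (area_eq a b) => e1 e2 e3.
case: (PQ_pos _ _ ha hab) => hP hPQ.
set m := 4 * Num.sqrt 3 * Num.sqrt (F a b).
have -> : X14f b b a / (X14f a b b + X14f b b a + X14f b b a) =
  (2 * P a ^+ 2 + 10 * P a * Q a b - m * (P a + Q a b)) /
  (12 * P a * (P a + 2 * Q a b) - 2 * m * (2 * P a + Q a b)).
  by congr (_ / _); rewrite /X14f ?e1 ?e2 /m /P /Q; field.
apply: key14 => //.
- by rewrite /m; apply: mulr_ge0; [apply: mulr_ge0 => // |]; apply: sqrtr_ge0.
- rewrite /m !exprMn !sqr_sqrtr //; last by apply: F_ge0.
  by rewrite /F /P /Q; field.
Qed.
End S.

Theorem theorem3p6 (R : rcfType) :
  iso_prec (@X25 R) (@X24 R) /\ iso_prec (@X24 R) (@X14 R).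
Proof.
split=> a b c ha hab <-; case: (PQ_pos _ _ _ ha hab) => hP hPQ.
  rewrite X25_dist // X24_dist //; apply: cmp => //.
  - exact: t25_ge0.
  - exact: t25_lt.
rewrite X24_dist // X14_dist //; apply: cmp => //.
- exact: t24_ge0.
- exact: X14_t.
Qed.
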